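(* Let $D$ be any distribution of $(X,A,Y)$ on $\mathcal{X}\times\{0,1\}\times\{0,1\}$ ($\mathcal{X}$ discrete), and let $\tilde D$ be its biased version with bias parameters $\beta_p,\beta_n,\nu\in(0,1)$. Let $\mathcal{H}$ be any class of classifiers $\mathcal{X}\times\{0,1\}\to\{0,1\}$, $\mathcal{H}_{\mathrm{fair,EO}}=\{f\in\mathcal{H}:TPR_0(f)=TPR_1(f)\}$ and $\widetilde{\mathcal{H}}_{\mathrm{fair,EO}}=\{f\in\mathcal{H}:\widetilde{TPR}_0(f)=\widetilde{TPR}_1(f)\}$. Then for every $h\in\mathcal{H}$, $\widetilde{TPR}_0(h)=TPR_0(h)$ and $\widetilde{TPR}_1(h)=TPR_1(h)$; hence $\mathcal{H}_{\mathrm{fair,EO}}=\widetilde{\mathcal{H}}_{\mathrm{fair,EO}}$.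
   Context: $TPR_a(f)=\Pr_D[f(X,A)=1\mid Y=1,A=a]$ and $\widetilde{TPR}_a(f)=\Pr_{\tilde D}[f(X,A)=1\mid\tilde Y=1,A=a]$. Biased distribution $\tilde D$: draw $(X,A,Y)\sim D$; points with $A=1$ are kept unchanged; points with $A=0,Y=1$ survive independently with probability $\beta_p$, points with $A=0,Y=0$ survive independently with probability $\beta_n$; each surviving point with $A=0,Y=1$ keeps label $1$ with probability $1-\nu$ and is flipped to $0$ with probability $\nu$, independently. $\tilde D$ is the distribution of the resulting $(X,A,\tilde Y)$ among surviving points. *)

(* Defs.v *)
From HB Require Import structures.
From mathcomp Require Import all_boot all_order all_algebra.
From mathcomp Require Import boolp classical_sets reals constructive_ereal ereal esum.
Set Implicit Arguments. Unset Strict Implicit. Unset Printing Implicit Defensive.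
Import Order.TTheory GRing.Theory Num.Theory.
Local Open Scope classical_set_scope.
Local Open Scope ring_scope.

Section Defs.
Variables (R : realType) (X : choiceType).

(* A discrete (sub-)probability mass function on X * {0,1} * {0,1};
   D x a y = Pr[X = x, A = a, Y = y].  Booleans encode {0,1} (true = 1). *)
Definition pmf := X -> bool -> bool -> R.

Definition is_distr (D : pmf) : Prop :=
  (forall x a y, 0 <= D x a y) /\
  (\esum_(t in [set: X * bool * bool]) (D t.1.1 t.1.2 t.2)%:E = 1)%E.

Definition Pr (D : pmf) (E : X -> bool -> bool -> bool) : R :=
  fine (\esum_(t in [set t : X * bool * bool | E t.1.1 t.1.2 t.2])
          (D t.1.1 t.1.2 t.2)%:E).

(* TPR_a(f) = Pr[f(X,A) = 1 | Y = 1, A = a] (ratio of probabilities;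
   the convention x / 0 = 0 of MathComp is used if the conditioning
   event has probability 0). *)
Definition TPR (D : pmf) (f : X -> bool -> bool) (a : bool) : R :=
  Pr D (fun x a' y => [&& f x a', a' == a & y]) /
  Pr D (fun x a' y => (a' == a) && y).

(* Biasing process. Survival probability of a point with (A, Y) = (a, y). *)
Definition keep (bp bn : R) (a y : bool) : R :=
  if a then 1 else if y then bp else bn.

(* Probability that a surviving point with (A,Y) = (a,y) gets observed label yt. *)
Definition relabel (nu : R) (a y yt : bool) : R :=
  if ~~ a && y then (if yt then 1 - nu else nu) else (yt == y)%:R.

(* Pr[X = x, A = a, Ytilde = yt, point survives] *)
Definition survive_mass (D : pmf) (bp bn nu : R) : pmf :=
  fun x a yt => \sum_(y : bool) D x a y * keep bp bn a y * relabel nu a y yt.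

Definition biased (D : pmf) (bp bn nu : R) : pmf :=
  fun x a yt => survive_mass D bp bn nu x a yt /
                Pr (survive_mass D bp bn nu) (fun _ _ _ => true).

End Defs.

(* Main.v *)
Require Import Defs.
From HB Require Import structures.
From mathcomp Require Import all_boot all_order all_algebra.
From mathcomp Require Import boolp classical_sets reals constructive_ereal ereal esum.
From mathcomp Require Import functions cardinality fsbigop.
Import Order.TTheory GRing.Theory Num.Theory.
Local Open Scope classical_set_scope.
Local Open Scope ring_scope.

Lemma esumZ (R : realType) (T : choiceType) (S : set T) (a : T -> \bar R) (r : R) :
  0 < r -> (forall x, S x -> (0 <= a x)%E) ->
  (\esum_(i in S) (r%:E * a i) = r%:E * \esum_(i in S) a i)%E.
Proof.
move=> r0 a0; rewrite /esum -ereal_sup_pZl //; congr ereal_sup.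
have key A : finite_set A -> A `<=` S ->
    (r%:E * (\sum_(x \in A) a x) = \sum_(x \in A) (r%:E * a x))%E.
  move=> finA AS; rewrite !fsbig_finite // big_seq [in RHS]big_seq.
  rewrite ge0_sume_distrr // => i; rewrite in_fset_set // inE => /AS; exact: a0.
apply/seteqP; split => z /=.
- move=> [A [finA AS] <-]; exists (\sum_(x \in A) a x)%E; first by exists A.
  exact: key.
- move=> [w [A [finA AS] <-] <-]; exists A => //; by rewrite key.
Qed.

Lemma fineZ (R : realType) (r : R) (e : \bar R) : 0 < r ->
  fine (r%:E * e)%E = r * fine e.
Proof.
move=> r0; case: e => [x||] /=; first by [].
- by rewrite gt0_muley ?lte_fin // mulr0.
- by rewrite gt0_muleNy ?lte_fin // mulr0.
Qed.

Section Main.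
Variables (R : realType) (X : choiceType) (D : pmf R X) (bp bn nu : R).
Hypothesis HD : is_distr D.
Hypothesis Hbp : 0 < bp < 1.
Hypothesis Hbn : 0 < bn < 1.
Hypothesis Hnu : 0 < nu < 1.

Let g := survive_mass D bp bn nu.
Let Z := Pr g (fun _ _ _ => true).

Lemma D_ge0 x a y : 0 <= D x a y.
Proof. by case: HD. Qed.

Lemma keep_gt0 a y : 0 < keep bp bn a y.
Proof. case/andP: Hbp; case/andP: Hbn => *; by case: a; case: y. Qed.

Lemma relabel_ge0 a y yt : 0 <= relabel nu a y yt.
Proof.
case/andP: Hnu => n0 n1; rewrite /relabel.
case: a; case: y; case: yt => //=; rewrite ?subr_ge0 ?ltW //.
Qed.

Lemma g_ge0 x a yt : 0 <= g x a yt.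
Proof.
rewrite /g /survive_mass; apply: sumr_ge0 => y _.
by rewrite !mulr_ge0 ?D_ge0 ?relabel_ge0 ?ltW ?keep_gt0.
Qed.

Lemma g_true x a : g x a true = D x a true * keep bp bn a true * relabel nu a true true.
Proof.
rewrite /g /survive_mass big_bool /=.
have -> : relabel nu a false true = 0 by case: a.
by rewrite mulr0 addr0.
Qed.

Lemma keep_le1 a y : keep bp bn a y <= 1.
Proof. case/andP: Hbp; case/andP: Hbn => *; case: a; case: y => //=; exact: ltW. Qed.

Lemma relabel_le1 a y yt : relabel nu a y yt <= 1.
Proof.
case/andP: Hnu => n0 n1; rewrite /relabel.
case: a; case: y; case: yt => //=; rewrite ?lerBlDr ?lerDl ?ltW //.
Qed.

Lemma relabel_diag_gt0 a y : 0 < relabel nu a y y.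
Proof. case/andP: Hnu => n0 n1; rewrite /relabel; case: a; case: y => //=; by rewrite subr_gt0. Qed.

Lemma g_le x a yt : g x a yt <= D x a yt + D x a (~~ yt).
Proof.
have H y : D x a y * keep bp bn a y * relabel nu a y yt <= D x a y.
  rewrite -mulrA ler_piMr ?D_ge0 // mulr_ile1 ?keep_le1 ?relabel_le1 ?relabel_ge0 //.
  exact: ltW (keep_gt0 _ _).
rewrite /g /survive_mass big_bool /=.
move: H; case: yt => H /=; [exact: lerD | rewrite [X in _ <= X]addrC; exact: lerD].
Qed.

Lemma g_diag x a y : D x a y * keep bp bn a y * relabel nu a y y <= g x a y.
Proof.
rewrite /g /survive_mass big_bool /=.
have H y' : 0 <= D x a y' * keep bp bn a y' * relabel nu a y' y.
  by rewrite !mulr_ge0 ?D_ge0 ?relabel_ge0 ?ltW ?keep_gt0.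
by move: H; case: y => H; [rewrite lerDl | rewrite lerDr].
Qed.

Let S := (\esum_(t in [set t : X * bool * bool | true]) (g t.1.1 t.1.2 t.2)%:E)%E.

Definition flip3 (t : X * bool * bool) : X * bool * bool := (t.1, ~~ t.2).

Lemma S_le : (S <= 2%:E)%E.
Proof.
rewrite /S set_true.
apply: (@le_trans _ _ (\esum_(t in [set: X * bool * bool])
   ((D t.1.1 t.1.2 t.2)%:E + (D (flip3 t).1.1 (flip3 t).1.2 (flip3 t).2)%:E))%E).
  apply: le_esum => t _; rewrite -EFinD lee_fin; exact: g_le.
rewrite esumD; last 2 first.
- by move=> t _; rewrite lee_fin D_ge0.
- by move=> t _; rewrite lee_fin D_ge0.
have E1 : (\esum_(t in [set: X * bool * bool]) (D t.1.1 t.1.2 t.2)%:E = 1)%E.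
  by case: HD.
rewrite -(@reindex_esum _ _ _ setT setT flip3 (fun t => (D t.1.1 t.1.2 t.2)%:E)).
  by rewrite E1 -EFinD.
rewrite setTT_bijective; exists flip3; by case=> [[x a] [|]].
Qed.

Lemma S_gt0 : (0 < S)%E.
Proof.
have [t0 Ht0] : exists t, 0 < D t.1.1 t.1.2 t.2.
  apply: contrapT => Hn.
  case: HD => _ E1.
  have E0 : (\esum_(t in [set: X * bool * bool]) (D t.1.1 t.1.2 t.2)%:E = 0)%E.
    apply: esum1 => t _; congr (_%:E); apply/eqP; rewrite eq_le D_ge0 andbT.
    by rewrite leNgt; apply/negP => Hp; apply: Hn; exists t.
  by move: E1; rewrite E0 => -[] /eqP; rewrite eq_sym oner_eq0.
apply: (@lt_le_trans _ _ (g t0.1.1 t0.1.2 t0.2)%:E).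
  rewrite lte_fin; apply: (lt_le_trans _ (g_diag _ _ _)).
  by rewrite !mulr_gt0 ?keep_gt0 ?relabel_diag_gt0.
apply: esum_ge; exists [set t0].
  by split; [exact: finite_set1 | by []].
by rewrite fsbig_set1.
Qed.

Lemma Z_gt0 : 0 < Z.
Proof.
have Sfin : S \is a fin_num.
  by rewrite ge0_fin_numE ?(ltW S_gt0) // (le_lt_trans S_le) ?ltry.
have -> : Z = fine S by [].
rewrite -lte_fin fineK //; exact: S_gt0.
Qed.

Let c a := keep bp bn a true * relabel nu a true true / Z.

Lemma c_gt0 a : 0 < c a.
Proof.
rewrite /c !mulr_gt0 ?keep_gt0 ?invr_gt0 ?Z_gt0 //; exact: relabel_diag_gt0.
Qed.

Lemma Pr_biased a (E : X -> bool -> bool -> bool) :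
  (forall x a' y, E x a' y -> (a' == a) && y) ->
  Pr (biased D bp bn nu) E = c a * Pr D E.
Proof.
move=> HE; rewrite /Pr -fineZ ?c_gt0 //; congr fine.
rewrite -esumZ ?c_gt0 //; last by move=> t _; rewrite lee_fin D_ge0.
apply: eq_esum => -[[x a'] y] /= /HE /andP[/eqP -> ->].
rewrite -EFinM; congr (_%:E).
rewrite /biased -/g g_true /c -/Z.
by rewrite [RHS]mulrC !mulrA.
Qed.

Lemma TPR_biased h a : TPR (biased D bp bn nu) h a = TPR D h a.
Proof.
rewrite /TPR (Pr_biased a); last by move=> x a' y /and3P[_ -> ->].
rewrite (Pr_biased a) //.
have c0 : c a != 0 by rewrite gt_eqF ?c_gt0.
by rewrite invfM mulrACA mulfV // mul1r.
Qed.

End Main.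

Theorem corollary3p6 (R : realType) (X : choiceType) (D : pmf R X)
    (bp bn nu : R) :
  is_distr D ->
  0 < bp < 1 -> 0 < bn < 1 -> 0 < nu < 1 ->
  forall H : set (X -> bool -> bool),
    (forall h, H h ->
       TPR (biased D bp bn nu) h false = TPR D h false /\
       TPR (biased D bp bn nu) h true = TPR D h true) /\
    [set f | H f /\ TPR D f false = TPR D f true] =
    [set f | H f /\ TPR (biased D bp bn nu) f false =
                    TPR (biased D bp bn nu) f true].
Proof.
move=> HD Hbp Hbn Hnu H; split.
  by move=> h _; rewrite !TPR_biased.
by apply/seteqP; split => f /= [Hf e]; split => //; rewrite !TPR_biased in e *.
Qed.
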